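(* For the modular data of the quantum double of $S_3$, each of the trace three modular invariants $Z_{24},Z_{42},Z_{35},Z_{53},Z_{44},Z_{(55)},Z_{(44)}$ has, up to equivalence, exactly one matching nimrep.
   Context: Primaries $0,\dots,7$, all self-conjugate, with $S=\frac16\begin{pmatrix}1&1&2&2&2&2&3&3\\1&1&2&2&2&2&-3&-3\\2&2&4&-2&-2&-2&0&0\\2&2&-2&4&-2&-2&0&0\\2&2&-2&-2&-2&4&0&0\\2&2&-2&-2&4&-2&0&0\\3&-3&0&0&0&0&3&-3\\3&-3&0&0&0&0&-3&3\end{pmatrix}$, fusion coefficients $N_{\lambda\mu}^\nu=\sum_\rho S_{\lambda\rho}S_{\mu\rho}\overline{S_{\nu\rho}}/S_{0\rho}$. Matrices are written as $\sum Z_{\lambda\mu}\chi_\lambda\chi_\mu^*$, and $st^*$ for linear forms is the matrix of products of coefficients. With $s_2=\chi_0+\chi_1+2\chi_2$, $s_3=\chi_0+\chi_1+2\chi_3$, $s_4=\chi_0+\chi_2+\chi_6$, $s_5=\chi_0+\chi_3+\chi_6$: $Z_{ij}=s_is_j^*$. $Z_{(44)}=|\chi_0+\chi_2|^2+\chi_1\chi_6^*+\chi_2\chi_6^*+\chi_6\chi_1^*+\chi_6\chi_2^*+|\chi_7|^2$, $Z_{(55)}=|\chi_0+\chi_3|^2+\chi_1\chi_6^*+\chi_3\chi_6^*+\chi_6\chi_1^*+\chi_6\chi_3^*+|\chi_7|^2$. A nimrep of dimension $n$: non-negative integer $n\times n$ matrices $G_\lambda$ with $G_0=I$, $G_{\bar\lambda}=G_\lambda^t$,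 $G_\lambda G_\mu=\sum_\nu N_{\lambda\mu}^\nu G_\nu$; nimreps are equivalent if conjugate by a common permutation matrix. $\mathrm{Exp}(Z)$ is the multiset with $Z_{\mu\mu}$ copies of $\mu$. A nimrep matches $Z$ if $n=\mathrm{Tr}\,Z$ and the $G_\lambda$ are simultaneously unitarily diagonalisable with joint eigenvalues $(S_{\lambda\mu}/S_{0\mu})_\lambda$, $\mu$ running through $\mathrm{Exp}(Z)$ with multiplicity. *)

(* Defs.v *)
From HB Require Import structures.
From mathcomp Require Import all_boot all_order all_algebra all_fingroup all_field.
Set Implicit Arguments. Unset Strict Implicit. Unset Printing Implicit Defensive.
Import Order.TTheory GRing.Theory Num.Theory.
Local Open Scope ring_scope.

(* Integer entries of 6*S, rows/columns indexed by primaries 0..7. *)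
Definition S6 : seq (seq int) :=
  [:: [:: 1; 1; 2; 2; 2; 2; 3; 3];
      [:: 1; 1; 2; 2; 2; 2; -3; -3];
      [:: 2; 2; 4; -2; -2; -2; 0; 0];
      [:: 2; 2; -2; 4; -2; -2; 0; 0];
      [:: 2; 2; -2; -2; -2; 4; 0; 0];
      [:: 2; 2; -2; -2; 4; -2; 0; 0];
      [:: 3; -3; 0; 0; 0; 0; 3; -3];
      [:: 3; -3; 0; 0; 0; 0; -3; 3]]%Z.

Definition Smx : 'M[algC]_8 :=
  \matrix_(i < 8, j < 8) ((nth 0%Z (nth [::] S6 i) j)%:~R / 6%:R).

Definition p0 : 'I_8 := ord0.

Definition cnj (l : 'I_8) : 'I_8 := l.

Definition Nfus (l m n : 'I_8) : algC :=
  \sum_(r < 8) Smx l r * Smx m r * (Smx n r)^* / Smx p0 r.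

(* Linear forms sum_l c_l chi_l, as coefficient functions. *)
Definition chi (k : nat) : 'I_8 -> nat := fun a => (nat_of_ord a == k)%N : nat.
Definition faddn (s t : 'I_8 -> nat) : 'I_8 -> nat := fun a => (s a + t a)%N.
Definition fscale (c : nat) (s : 'I_8 -> nat) : 'I_8 -> nat := fun a => (c * s a)%N.

Definition outer (s t : 'I_8 -> nat) : 'M[nat]_8 := \matrix_(a, b) (s a * t b)%N.
Definition madd (A B : 'M[nat]_8) : 'M[nat]_8 := \matrix_(a, b) (A a b + B a b)%N.

Definition s2 := faddn (faddn (chi 0) (chi 1)) (fscale 2 (chi 2)).
Definition s3 := faddn (faddn (chi 0) (chi 1)) (fscale 2 (chi 3)).
Definition s4 := faddn (faddn (chi 0) (chi 2)) (chi 6).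
Definition s5 := faddn (faddn (chi 0) (chi 3)) (chi 6).

Definition Z24 := outer s2 s4.
Definition Z42 := outer s4 s2.
Definition Z35 := outer s3 s5.
Definition Z53 := outer s5 s3.
Definition Z44 := outer s4 s4.

Definition Zp44 : 'M[nat]_8 :=
  madd (outer (faddn (chi 0) (chi 2)) (faddn (chi 0) (chi 2)))
  (madd (outer (chi 1) (chi 6))
  (madd (outer (chi 2) (chi 6))
  (madd (outer (chi 6) (chi 1))
  (madd (outer (chi 6) (chi 2))
        (outer (chi 7) (chi 7)))))).

Definition Zp55 : 'M[nat]_8 :=
  madd (outer (faddn (chi 0) (chi 3)) (faddn (chi 0) (chi 3)))
  (madd (outer (chi 1) (chi 6))
  (madd (outer (chi 3) (chi 6))
  (madd (outer (chi 6) (chi 1))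
  (madd (outer (chi 6) (chi 3))
        (outer (chi 7) (chi 7)))))).

Definition toC n (A : 'M[nat]_n) : 'M[algC]_n := map_mx (fun k : nat => k%:R) A.

(* A nimrep of dimension n (non-negativity / integrality: entries in nat). *)
Definition nimrep n (G : 'I_8 -> 'M[nat]_n) : Prop :=
  [/\ G p0 = \matrix_(i, j) (i == j : nat),
      forall l, G (cnj l) = (G l)^T
    & forall l m, toC (G l) *m toC (G m) = \sum_(k < 8) Nfus l m k *: toC (G k)].

Definition nimrep_equiv n (G G' : 'I_8 -> 'M[nat]_n) : Prop :=
  exists s : 'S_n, forall l, G' l = col_perm s (row_perm s (G l)).

Definition mxtr8 (Z : 'M[nat]_8) : nat := (\sum_(m < 8) Z m m)%N.

(* G matches Z: n = Tr Z, and the G_l are simultaneously unitarily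
   diagonalisable with joint eigenvalues (S_{l mu}/S_{0 mu})_l, mu running
   through Exp(Z) with multiplicity (enumerated by mu : 'I_n -> 'I_8, where
   each m occurs exactly Z m m times). *)
Definition matches (Z : 'M[nat]_8) n (G : 'I_8 -> 'M[nat]_n) : Prop :=
  n = mxtr8 Z /\
  exists (mu : 'I_n -> 'I_8) (U : 'M[algC]_n),
    [/\ forall m, #|[pred i | mu i == m]| = Z m m,
        U *m (map_mx Num.conj U)^T = 1%:M
      & forall l, (map_mx Num.conj U)^T *m toC (G l) *m U
                  = diag_mx (\row_i (Smx l (mu i) / Smx p0 (mu i)))].

Definition unique_matching_nimrep (Z : 'M[nat]_8) : Prop :=
  (exists n (G : 'I_8 -> 'M[nat]_n), nimrep G /\ matches Z G) /\
  (forall n (G G' : 'I_8 -> 'M[nat]_n),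
      nimrep G -> matches Z G -> nimrep G' -> matches Z G' -> nimrep_equiv G G').

(* Main.v *)
Require Import Defs.
From mathcomp Require Import all_boot all_order all_algebra all_fingroup all_field.
From mathcomp Require Import zify ring lra.
Set Implicit Arguments. Unset Strict Implicit. Unset Printing Implicit Defensive.
Import Order.TTheory GRing.Theory Num.Theory.

Module Part1.
Local Open Scope ring_scope.

Lemma sum_iota (R : nmodType) n (F : nat -> R) :
  \sum_(i < n) F i = foldr (fun i acc => F i + acc) 0 (iota 0 n).
Proof.
rewrite -(big_mkord xpredT F) /index_iota subn0.
by elim: (iota 0 n) => [|a s IH]; rewrite ?big_nil ?big_cons ?IH.
Qed.

Lemma ord_all n (P : 'I_n.+1 -> bool) :
  all (fun k => P (inord k)) (iota 0 n.+1) -> forall i, P i.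
Proof.
move=> /allP H i; have := H i; rewrite mem_iota /= add0n ltn_ord inord_val.
by apply.
Qed.

Definition s6 (i j : nat) : int := nth 0%Z (nth [::] S6 i) j.
Definition sQ (i j : nat) : rat := (s6 i j)%:~R / 6%:R.

Lemma SmxE (l r : 'I_8) : Smx l r = ratr (sQ l r).
Proof. by rewrite mxE /sQ /s6 fmorph_div rmorph_int rmorph_nat. Qed.
Definition Ntab : seq (seq (seq nat)) :=
  [:: [:: [:: 1; 0; 0; 0; 0; 0; 0; 0]; [:: 0; 1; 0; 0; 0; 0; 0; 0]; [:: 0; 0; 1; 0; 0; 0; 0; 0]; [:: 0; 0; 0; 1; 0; 0; 0; 0]; [:: 0; 0; 0; 0; 1; 0; 0; 0]; [:: 0; 0; 0; 0; 0; 1; 0; 0]; [:: 0; 0; 0; 0; 0; 0; 1; 0]; [:: 0; 0; 0; 0; 0; 0; 0; 1]];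
     [:: [:: 0; 1; 0; 0; 0; 0; 0; 0]; [:: 1; 0; 0; 0; 0; 0; 0; 0]; [:: 0; 0; 1; 0; 0; 0; 0; 0]; [:: 0; 0; 0; 1; 0; 0; 0; 0]; [:: 0; 0; 0; 0; 1; 0; 0; 0]; [:: 0; 0; 0; 0; 0; 1; 0; 0]; [:: 0; 0; 0; 0; 0; 0; 0; 1]; [:: 0; 0; 0; 0; 0; 0; 1; 0]];
     [:: [:: 0; 0; 1; 0; 0; 0; 0; 0]; [:: 0; 0; 1; 0; 0; 0; 0; 0]; [:: 1; 1; 1; 0; 0; 0; 0; 0]; [:: 0; 0; 0; 0; 1; 1; 0; 0]; [:: 0; 0; 0; 1; 0; 1; 0; 0]; [:: 0; 0; 0; 1; 1; 0; 0; 0]; [:: 0; 0; 0; 0; 0; 0; 1; 1]; [:: 0; 0; 0; 0; 0; 0; 1; 1]];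
     [:: [:: 0; 0; 0; 1; 0; 0; 0; 0]; [:: 0; 0; 0; 1; 0; 0; 0; 0]; [:: 0; 0; 0; 0; 1; 1; 0; 0]; [:: 1; 1; 0; 1; 0; 0; 0; 0]; [:: 0; 0; 1; 0; 0; 1; 0; 0]; [:: 0; 0; 1; 0; 1; 0; 0; 0]; [:: 0; 0; 0; 0; 0; 0; 1; 1]; [:: 0; 0; 0; 0; 0; 0; 1; 1]];
     [:: [:: 0; 0; 0; 0; 1; 0; 0; 0]; [:: 0; 0; 0; 0; 1; 0; 0; 0]; [:: 0; 0; 0; 1; 0; 1; 0; 0]; [:: 0; 0; 1; 0; 0; 1; 0; 0]; [:: 1; 1; 0; 0; 1; 0; 0; 0]; [:: 0; 0; 1; 1; 0; 0; 0; 0]; [:: 0; 0; 0; 0; 0; 0; 1; 1]; [:: 0; 0; 0; 0; 0; 0; 1; 1]];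
     [:: [:: 0; 0; 0; 0; 0; 1; 0; 0]; [:: 0; 0; 0; 0; 0; 1; 0; 0]; [:: 0; 0; 0; 1; 1; 0; 0; 0]; [:: 0; 0; 1; 0; 1; 0; 0; 0]; [:: 0; 0; 1; 1; 0; 0; 0; 0]; [:: 1; 1; 0; 0; 0; 1; 0; 0]; [:: 0; 0; 0; 0; 0; 0; 1; 1]; [:: 0; 0; 0; 0; 0; 0; 1; 1]];
     [:: [:: 0; 0; 0; 0; 0; 0; 1; 0]; [:: 0; 0; 0; 0; 0; 0; 0; 1]; [:: 0; 0; 0; 0; 0; 0; 1; 1]; [:: 0; 0; 0; 0; 0; 0; 1; 1]; [:: 0; 0; 0; 0; 0; 0; 1; 1]; [:: 0; 0; 0; 0; 0; 0; 1; 1]; [:: 1; 0; 1; 1; 1; 1; 0; 0]; [:: 0; 1; 1; 1; 1; 1; 0; 0]];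
     [:: [:: 0; 0; 0; 0; 0; 0; 0; 1]; [:: 0; 0; 0; 0; 0; 0; 1; 0]; [:: 0; 0; 0; 0; 0; 0; 1; 1]; [:: 0; 0; 0; 0; 0; 0; 1; 1]; [:: 0; 0; 0; 0; 0; 0; 1; 1]; [:: 0; 0; 0; 0; 0; 0; 1; 1]; [:: 0; 1; 1; 1; 1; 1; 0; 0]; [:: 1; 0; 1; 1; 1; 1; 0; 0]]].

Definition Nn (l m k : nat) : nat := nth 0%N (nth [::] (nth [::] Ntab l) m) k.
Definition NQ (l m k : nat) : rat :=
  foldr (fun r acc => sQ l r * sQ m r * sQ k r / sQ 0 r + acc) 0 (iota 0 8).

Lemma NQ_ok : all (fun l => all (fun m => all (fun k => NQ l m k == (Nn l m k)%:R)
   (iota 0 8)) (iota 0 8)) (iota 0 8).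
Proof. by vm_compute. Qed.

Lemma NfusE (l m k : 'I_8) : Nfus l m k = (Nn l m k)%:R.
Proof.
have : NQ l m k == (Nn l m k)%:R.
  have /allP := NQ_ok; move/(_ l); rewrite mem_iota ltn_ord => /(_ isT).
  move/allP/(_ m); rewrite mem_iota ltn_ord => /(_ isT).
  by move/allP/(_ k); rewrite mem_iota ltn_ord => /(_ isT).
move/eqP => E.
rewrite -(rmorph_nat (ratr : rat -> algC)) -E /Nfus /NQ.
rewrite -(@sum_iota _ 8 (fun r => sQ l r * sQ m r * sQ k r / sQ 0 r)) rmorph_sum; apply: eq_bigr => r _.
rewrite !SmxE conj_Crat ?Crat_rat // /p0 /=.
by rewrite !(rmorphM, fmorphV).
Qed.

End Part1.
Import Part1.

Module Part2.
Local Open Scope ring_scope.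

Lemma count_sum n (mu : 'I_n -> 'I_8) (f : 'I_8 -> algC) :
  \sum_i f (mu i) = \sum_m (#|[pred i | mu i == m]|)%:R * f m.
Proof.
symmetry.
transitivity (\sum_m \sum_(i | mu i == m) f m).
  by apply: eq_bigr => m _; rewrite sumr_const mulr_natl.
rewrite (exchange_big_dep xpredT) //=; apply: eq_bigr => i _.
by rewrite (big_pred1 (mu i)) // => m; rewrite /= eq_sym.
Qed.

Lemma fus_nat n (G : 'I_8 -> 'M[nat]_n) : nimrep G -> forall l m i j,
  (\sum_k G l i k * G m k j)%N = (\sum_(c < 8) Nn l m c * G c i j)%N.
Proof.
case=> _ _ H l m i j; have := congr1 (fun M : 'M[algC]_n => M i j) (H l m).
rewrite mxE summxE => E.
apply/eqP; rewrite -(@eqr_nat algC) !natr_sum; apply/eqP.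
rewrite (eq_bigr (fun k => toC (G l) i k * toC (G m) k j)); last first.
  by move=> k _; rewrite !mxE natrM.
rewrite E; apply: eq_bigr => c _; by rewrite !mxE NfusE natrM.
Qed.

Definition psi (l m : 'I_8) : algC := Smx l m / Smx p0 m.

Lemma matches_tr Z n (G : 'I_8 -> 'M[nat]_n) : matches Z G -> forall l,
  ((\sum_i G l i i)%N)%:R = \sum_m (Z m m)%:R * psi l m
  /\ ((\sum_i \sum_j G l i j * G l j i)%N)%:R = \sum_m (Z m m)%:R * psi l m ^+ 2.
Proof.
case=> _ [mu [U [Hc Hu Hd]]] l.
set Uc := (map_mx Num.conj U)^T in Hu Hd.
have Hu' : Uc *m U = 1%:M by apply: mulmx1C.
have Hdl := Hd l; set D := diag_mx _ in Hdl.
have HG : toC (G l) = U *m D *m Uc.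
  by rewrite -Hdl !mulmxA Hu mul1mx -mulmxA Hu mulmx1.
have trE : forall A : 'M[algC]_n, \tr (U *m A *m Uc) = \tr A.
  by move=> A; rewrite mxtrace_mulC mulmxA Hu' mul1mx.
split.
  have E1 : \tr (toC (G l)) = \tr D by rewrite HG trE.
  rewrite natr_sum.
  have -> : \sum_i (G l i i)%:R = \tr (toC (G l)) :> algC.
    by rewrite /mxtrace; apply: eq_bigr => i _; rewrite mxE.
  rewrite E1 /D mxtrace_diag.
  have -> : \sum_j (\row_i (Smx l (mu i) / Smx p0 (mu i))) 0 j = \sum_j psi l (mu j).
    by apply: eq_bigr => j _; rewrite mxE.
  rewrite (count_sum mu (psi l)); apply: eq_bigr => m _; by rewrite Hc.
have HGG : toC (G l) *m toC (G l) = U *m (D *m D) *m Uc.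
  by rewrite HG -!mulmxA (mulmxA Uc U) Hu' mul1mx.
have : \tr (toC (G l) *m toC (G l)) = \tr (D *m D) by rewrite HGG trE.
rewrite /D mulmx_diag mxtrace_diag => E2.
have E3 : \tr (toC (G l) *m toC (G l)) = \sum_j psi l (mu j) ^+ 2.
  by rewrite E2; apply: eq_bigr => j _; rewrite /psi !mxE expr2.
rewrite (count_sum mu (fun m => psi l m ^+ 2)) in E3.
have -> : \sum_m (Z m m)%:R * psi l m ^+ 2 = \sum_m (#|[pred i | mu i == m]|)%:R * psi l m ^+ 2.
  by apply: eq_bigr => m _; rewrite Hc.
rewrite -E3 /mxtrace natr_sum; apply: eq_bigr => i _.
rewrite mxE natr_sum; apply: eq_bigr => j _; by rewrite !mxE natrM.
Qed.

End Part2.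
Import Part2.

Module Part3.
Local Open Scope ring_scope.

Lemma sum_ord_fun (R : nmodType) n (F : 'I_n -> R) (f : nat -> R) :
  (forall i : 'I_n, F i = f i) ->
  \sum_i F i = foldr (fun i acc => f i + acc) 0 (iota 0 n).
Proof. by move=> H; rewrite -sum_iota; apply: eq_bigr => i _; exact: H. Qed.

Definition gof (G : 'I_8 -> 'M[nat]_3) (l i j : nat) : nat :=
  G (inord l) (inord i) (inord j).

Definition fsum (n : nat) (f : nat -> nat) : nat :=
  foldr (fun i acc => (f i + acc)%N) 0%N (iota 0 n).

Lemma psiE (l m : 'I_8) : psi l m = ratr (sQ l m / sQ 0 m).
Proof. by rewrite /psi !SmxE -fmorph_div. Qed.

Lemma nat_facts Z (G : 'I_8 -> 'M[nat]_3) (T Q : nat -> nat) (zd : nat -> nat) :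
  nimrep G -> matches Z G ->
  (forall m : 'I_8, Z m m = zd m) ->
  (forall l, (l < 8)%N -> foldr (fun m acc => (zd m)%:R * (sQ l m / sQ 0 m) + acc) 0 (iota 0 8)
       = (T l)%:R :> rat) ->
  (forall l, (l < 8)%N -> foldr (fun m acc => (zd m)%:R * (sQ l m / sQ 0 m) ^+ 2 + acc) 0 (iota 0 8)
       = (Q l)%:R :> rat) ->
  [/\ (forall l i j, (l < 8)%N -> (i < 3)%N -> (j < 3)%N -> gof G l i j = gof G l j i),
      (forall i j, (i < 3)%N -> (j < 3)%N -> gof G 0 i j = (i == j)),
      (forall l m i j, (l < 8)%N -> (m < 8)%N -> (i < 3)%N -> (j < 3)%N ->
           fsum 3 (fun k => gof G l i k * gof G m k j)%N
         = fsum 8 (fun c => Nn l m c * gof G c i j)%N),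
      (forall l, (l < 8)%N -> fsum 3 (fun i => gof G l i i) = T l) &
      (forall l, (l < 8)%N -> fsum 3 (fun i => fsum 3 (fun j => gof G l i j * gof G l j i)%N) = Q l)].
Proof.
move=> HN HM HZ HT HQ; have HN' := HN; case: HN' => H0 Hs _.
split.
- move=> l i j _ _ _; rewrite /gof.
  by rewrite [in LHS](Hs (inord l)) mxE.
- move=> i j Hi Hj; rewrite /gof.
  have -> : inord 0 = p0 by apply: val_inj; rewrite /= inordK.
  rewrite H0 mxE.
  have -> : (@inord 2 i == inord j) = (i == j).
    by rewrite -(inj_eq val_inj) /= !inordK.
  by [].
- move=> l m i j Hl Hm Hi Hj.
  have := fus_nat HN (inord l) (inord m) (inord i) (inord j).
  rewrite (@sum_ord_fun _ 3 _ (fun k => gof G l i k * gof G m k j)%N); last first.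
    by move=> k; rewrite /gof inord_val.
  rewrite (@sum_ord_fun _ 8 _ (fun c => Nn l m c * gof G c i j)%N) //.
  by move=> c; rewrite /gof inord_val !inordK.
- move=> l Hl; have [E _] := matches_tr HM (inord l).
  move: E.
  rewrite (@sum_ord_fun _ 3 _ (fun i => gof G l i i)); last first.
    by move=> k; rewrite /gof inord_val.
  have -> : \sum_m (Z m m)%:R * psi (inord l) m = ratr (T l)%:R :> algC.
    rewrite -(HT l Hl) -(@sum_iota _ 8 (fun m => (zd m)%:R * (sQ l m / sQ 0 m))).
    rewrite rmorph_sum; apply: eq_bigr => m _.
    by rewrite HZ psiE rmorphM rmorph_nat inordK.
  by rewrite rmorph_nat => /eqP; rewrite eqr_nat => /eqP.
- move=> l Hl; have [_ E] := matches_tr HM (inord l).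
  move: E.
  rewrite (@sum_ord_fun _ 3 _ (fun i => fsum 3 (fun j => gof G l i j * gof G l j i)%N)); last first.
    move=> i; rewrite (@sum_ord_fun _ 3 _ (fun j => gof G l i j * gof G l j i)%N) //.
    by move=> j; rewrite /gof !inord_val.
  have -> : \sum_m (Z m m)%:R * psi (inord l) m ^+ 2 = ratr (Q l)%:R :> algC.
    rewrite -(HQ l Hl) -(@sum_iota _ 8 (fun m => (zd m)%:R * (sQ l m / sQ 0 m) ^+ 2)).
    rewrite rmorph_sum; apply: eq_bigr => m _.
    by rewrite HZ psiE rmorphM rmorphXn rmorph_nat inordK.
  by rewrite rmorph_nat => /eqP; rewrite eqr_nat => /eqP.
Qed.

End Part3.
Import Part3.

Module Part4.

Local Open Scope nat_scope.

Definition idx (i j : nat) : nat := nth 0 [:: 0; 3; 5] (minn i j) + (maxn i j - minn i j).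
Definition tent (t : seq nat) (i j : nat) : nat := nth 0 t (idx i j).
Definition idt : seq nat := [:: 1; 0; 0; 1; 0; 1].
Definition asgT := seq (option (seq nat)).
Definition aent (a : asgT) l i j : nat :=
  if nth None a l is Some t then tent t i j else 0.
Definition defd (a : asgT) l : bool := nth None a l != None.
Definition fus_ok (a : asgT) l m : bool :=
  all (fun i => all (fun j =>
     fsum 3 (fun k => aent a l i k * aent a m k j) ==
     fsum 8 (fun c => Nn l m c * aent a c i j)) (iota 0 3)) (iota 0 3).
Definition involved l m := l :: m :: [seq c <- iota 0 8 | Nn l m c != 0].
Definition check (a : asgT) : bool :=
  all (fun l => all (fun m => all (defd a) (involved l m) ==> fus_ok a l m)
     (iota 0 8)) (iota 0 8).
Definition trsq_ok (T Q : nat -> nat) k (t : seq nat) : bool :=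
  (fsum 3 (fun i => tent t i i) == T k) &&
  (fsum 3 (fun i => fsum 3 (fun j => tent t i j * tent t j i)) == Q k).
Fixpoint box n : seq (seq nat) :=
  if n is n'.+1 then [seq x :: t | x <- iota 0 5, t <- box n'] else [:: [::]].
Definition cands T Q k := [seq t <- box 6 | trsq_ok T Q k t].
Definition extend (a : asgT) k t : asgT := set_nth None a k (Some t).
Definition step T Q k (S : seq asgT) : seq asgT :=
  flatten [seq [seq extend a k t | t <- cands T Q k & check (extend a k t)] | a <- S].
Definition asg0 : asgT := [:: Some idt; None; None; None; None; None; None; None].
Definition search T Q :=
  step T Q 7 (step T Q 6 (step T Q 5 (step T Q 4 (step T Q 3 (step T Q 2 (step T Q 1 [:: asg0])))))).

Definition Facts (T Q : nat -> nat) (g : nat -> nat -> nat -> nat) : Prop :=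
  [/\ (forall l i j, l < 8 -> i < 3 -> j < 3 -> g l i j = g l j i),
      (forall i j, i < 3 -> j < 3 -> g 0 i j = (i == j)),
      (forall l m i j, l < 8 -> m < 8 -> i < 3 -> j < 3 ->
           fsum 3 (fun k => g l i k * g m k j) = fsum 8 (fun c => Nn l m c * g c i j)),
      (forall l, l < 8 -> fsum 3 (fun i => g l i i) = T l) &
      (forall l, l < 8 -> fsum 3 (fun i => fsum 3 (fun j => g l i j * g l j i)) = Q l)].

Definition agrees (a : asgT) (g : nat -> nat -> nat -> nat) : Prop :=
  forall l t, nth None a l = Some t -> forall i j, i < 3 -> j < 3 -> tent t i j = g l i j.

Lemma foldr_ext (s : seq nat) (f f' : nat -> nat) :
  (forall i, i \in s -> f i = f' i) ->
  foldr (fun i acc => f i + acc) 0 s = foldr (fun i acc => f' i + acc) 0 s.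
Proof.
elim: s => [//|x s IH] H /=; rewrite H ?mem_head // IH // => i Hi.
by apply: H; rewrite in_cons Hi orbT.
Qed.

Lemma fsum_ext n (f f' : nat -> nat) :
  (forall i, i < n -> f i = f' i) -> fsum n f = fsum n f'.
Proof. by move=> H; apply: foldr_ext => i; rewrite mem_iota add0n => /andP[_ /H]. Qed.

Lemma foldr_ge (s : seq nat) (f : nat -> nat) i :
  i \in s -> f i <= foldr (fun i acc => f i + acc) 0 s.
Proof.
elim: s => [//|x s IH]; rewrite in_cons => /orP[/eqP -> /=|/IH /= H].
  exact: leq_addr.
exact: leq_trans H (leq_addl _ _).
Qed.

Lemma fsum_ge n (f : nat -> nat) i : i < n -> f i <= fsum n f.
Proof. by move=> H; apply: foldr_ge; rewrite mem_iota add0n H. Qed.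

Lemma check_sound T Q g a : Facts T Q g -> agrees a g -> check a.
Proof.
case=> Hs H0 Hf Ht Hq Ha.
apply/allP => l; rewrite mem_iota add0n => Hl; apply/allP => m.
rewrite mem_iota add0n => Hm; apply/implyP => /allP Hdef.
have Hc : forall c, c \in involved l m -> forall i j, i < 3 -> j < 3 -> aent a c i j = g c i j.
  move=> c /Hdef; rewrite /defd /aent; case E: (nth None a c) => [t|//] _.
  exact: Ha E.
apply/allP => i; rewrite mem_iota add0n => Hi; apply/allP => j.
rewrite mem_iota add0n => Hj; apply/eqP.
rewrite (@fsum_ext 3 _ (fun k => g l i k * g m k j)); last first.
  move=> k Hk; rewrite !Hc //; first by rewrite in_cons in_cons eqxx orbT.
  exact: mem_head.
rewrite (Hf l m i j Hl Hm Hi Hj); apply: fsum_ext => c Hc8.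
case E: (Nn l m c == 0); first by rewrite (eqP E) !mul0n.
rewrite Hc //; rewrite !in_cons mem_filter E mem_iota add0n Hc8.
by rewrite !orbT.
Qed.

Definition matg (g : nat -> nat -> nat -> nat) k : seq nat :=
  [:: g k 0 0; g k 0 1; g k 0 2; g k 1 1; g k 1 2; g k 2 2].

Lemma matg_agree T Q g k : Facts T Q g -> k < 8 ->
  forall i j, i < 3 -> j < 3 -> tent (matg g k) i j = g k i j.
Proof.
case=> Hs _ _ _ _ Hk i j.
by case: i => [|[|[|i]]] // _; case: j => [|[|[|j]]] // _;
   rewrite /tent /idx /= ?(Hs k 1 0) ?(Hs k 2 0) ?(Hs k 2 1).
Qed.

Lemma agrees0 T Q g : Facts T Q g -> agrees asg0 g.
Proof.
case=> _ H0 _ _ _ l t; case: l => [|l] E; last first.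
  have : nth None asg0 l.+1 = None.
    by case: l {E} => [|[|[|[|[|[|[|l]]]]]]] //=; rewrite nth_nil.
  by rewrite E.
case: E => <- i j Hi Hj; rewrite H0 //.
by case: i Hi => [|[|[|i]]] // _; case: j Hj => [|[|[|j]]].
Qed.

Lemma agrees_ext T Q g a k : Facts T Q g -> k < 8 -> agrees a g ->
  agrees (extend a k (matg g k)) g.
Proof.
move=> HF Hk Ha l t; rewrite /extend nth_set_nth /=.
case: eqP => [-> [<-]|_ E]; last exact: Ha E.
exact: (matg_agree HF Hk).
Qed.

Lemma sq_le24 x : x * x <= 24 -> x <= 4.
Proof.
move=> H; rewrite leqNgt; apply/negP => Hx.
have : 25 <= x * x by apply: (@leq_mul 5 5).
by move=> H'; have := leq_trans H' H.
Qed.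

Lemma mem_box n t : size t = n -> all (fun x => x < 5) t -> t \in box n.
Proof.
elim: n t => [|n IH] [|x t] // /eqP; rewrite eqSS => /eqP Hs /andP[Hx Ht].
apply: (@allpairs_f _ _ _ (fun x t => x :: t) (iota 0 5) (box n)).
  by rewrite mem_iota.
exact: IH.
Qed.

Lemma matg_cands T Q g k : Facts T Q g -> k < 8 -> (forall k, k < 8 -> Q k <= 24) ->
  matg g k \in cands T Q k.
Proof.
move=> HF Hk HQ; have HF' := HF; case: HF' => Hs _ _ Ht Hq.
have Hb : forall i j, i < 3 -> j < 3 -> g k i j < 5.
  move=> i j Hi Hj; apply: sq_le24; rewrite {2}(Hs k i j) //.
  apply: leq_trans (HQ k Hk); rewrite -(Hq k Hk).
  apply: leq_trans (fsum_ge (fun i => fsum 3 (fun j => g k i j * g k j i)) Hi).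
  exact: (fsum_ge (fun j => g k i j * g k j i) Hj).
rewrite mem_filter; apply/andP; split.
  apply/andP; split; apply/eqP.
    rewrite -(Ht k Hk); apply: fsum_ext => i Hi; exact: (matg_agree HF Hk).
  rewrite -(Hq k Hk); apply: fsum_ext => i Hi; apply: fsum_ext => j Hj.
  by rewrite !(matg_agree HF Hk).
apply: mem_box => //=; rewrite !Hb //.
Qed.

Lemma step_mem T Q k S a t : a \in S -> t \in cands T Q k -> check (extend a k t) ->
  extend a k t \in step T Q k S.
Proof.
move=> Ha Ht Hc; apply/flatten_mapP; exists a => //.
by apply: map_f; rewrite mem_filter Hc.
Qed.

Definition afull g : asgT := [:: Some idt; Some (matg g 1); Some (matg g 2); Some (matg g 3);
  Some (matg g 4); Some (matg g 5); Some (matg g 6); Some (matg g 7)].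

Lemma afull_search T Q g : Facts T Q g -> (forall k, k < 8 -> Q k <= 24) ->
  afull g \in search T Q.
Proof.
move=> HF HQ.
have A0 := agrees0 HF.
pose a1 := extend asg0 1 (matg g 1). have A1 : agrees a1 g by apply: (agrees_ext HF).
pose a2 := extend a1 2 (matg g 2). have A2 : agrees a2 g by apply: (agrees_ext HF).
pose a3 := extend a2 3 (matg g 3). have A3 : agrees a3 g by apply: (agrees_ext HF).
pose a4 := extend a3 4 (matg g 4). have A4 : agrees a4 g by apply: (agrees_ext HF).
pose a5 := extend a4 5 (matg g 5). have A5 : agrees a5 g by apply: (agrees_ext HF).
pose a6 := extend a5 6 (matg g 6). have A6 : agrees a6 g by apply: (agrees_ext HF).
pose a7 := extend a6 7 (matg g 7). have A7 : agrees a7 g by apply: (agrees_ext HF).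
have -> : afull g = a7 by [].
rewrite /search.
apply: step_mem; [|by apply: (matg_cands HF)|exact: (check_sound HF A7)].
apply: step_mem; [|by apply: (matg_cands HF)|exact: (check_sound HF A6)].
apply: step_mem; [|by apply: (matg_cands HF)|exact: (check_sound HF A5)].
apply: step_mem; [|by apply: (matg_cands HF)|exact: (check_sound HF A4)].
apply: step_mem; [|by apply: (matg_cands HF)|exact: (check_sound HF A3)].
apply: step_mem; [|by apply: (matg_cands HF)|exact: (check_sound HF A2)].
apply: step_mem; [|by apply: (matg_cands HF)|exact: (check_sound HF A1)].
exact: mem_head.
Qed.

End Part4.
Import Part4.

Module Part5.
Local Open Scope nat_scope.

Definition perms6 : seq (seq nat) :=
  [:: [:: 0; 1; 2]; [:: 0; 2; 1]; [:: 1; 0; 2]; [:: 1; 2; 0]; [:: 2; 0; 1]; [:: 2; 1; 0]].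

Definition perm_rel (a a' : asgT) (p : seq nat) : bool :=
  all (fun l => all (fun i => all (fun j =>
    aent a' l i j == aent a l (nth 0 p i) (nth 0 p j)) (iota 0 3)) (iota 0 3)) (iota 0 8).

Definition perm_check (S : seq asgT) : bool :=
  all (fun a => all (fun a' => has (perm_rel a a') perms6) S) S.

Lemma perms6_ok : all (fun p => uniq p && (size p == 3) && all (fun x => x < 3) p) perms6.
Proof. by []. Qed.

Lemma pf_inj (p : seq nat) : p \in perms6 ->
  injective (fun i : 'I_3 => (inord (nth 0 p i) : 'I_3)).
Proof.
move=> Hp; have /allP/(_ p Hp)/andP[/andP[Hu /eqP Hs] /allP Ha] := perms6_ok.
have Hlt : forall i : 'I_3, nth 0 p i < 3.
  by move=> i; apply: Ha; apply: mem_nth; rewrite Hs.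
move=> i j /(congr1 val) /=; rewrite !inordK // => /eqP.
rewrite nth_uniq ?Hs // => /eqP; exact: val_inj.
Qed.

Lemma afull_agrees T Q g : Facts T Q g ->
  forall l i j, l < 8 -> i < 3 -> j < 3 -> aent (afull g) l i j = g l i j.
Proof.
move=> HF; have HF' := HF; case: HF' => Hs H0 _ _ _ l i j Hl Hi Hj.
case: l Hl => [|l] Hl.
  rewrite /aent /= H0 //.
  by case: i Hi => [|[|[|i]]] // _; case: j Hj => [|[|[|j]]].
rewrite /aent.
have -> : nth None (afull g) l.+1 = Some (matg g l.+1).
  by case: l Hl => [|[|[|[|[|[|[|l]]]]]]].
exact: (matg_agree HF Hl).
Qed.

Lemma facts_of Z (G : 'I_8 -> 'M[nat]_3) (T Q : nat -> nat) (zd : nat -> nat) :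
  nimrep G -> matches Z G ->
  (forall m : 'I_8, Z m m = zd m) ->
  (forall l, (l < 8)%N -> foldr (fun m acc => ((zd m)%:R)%R * (sQ l m / sQ 0 m) + acc)%R 0%R (iota 0 8)
       = ((T l)%:R)%R :> rat) ->
  (forall l, (l < 8)%N -> foldr (fun m acc => ((zd m)%:R)%R * (sQ l m / sQ 0 m) ^+ 2 + acc)%R 0%R (iota 0 8)
       = ((Q l)%:R)%R :> rat) ->
  Facts T Q (gof G).
Proof. move=> HN HM HZ HT HQ; exact: (nat_facts HN HM HZ HT HQ). Qed.

Lemma uniq_gen Z (T Q zd : nat -> nat) :
  mxtr8 Z = 3 ->
  (forall m : 'I_8, Z m m = zd m) ->
  (forall l, (l < 8)%N -> foldr (fun m acc => ((zd m)%:R)%R * (sQ l m / sQ 0 m) + acc)%R 0%R (iota 0 8)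
       = ((T l)%:R)%R :> rat) ->
  (forall l, (l < 8)%N -> foldr (fun m acc => ((zd m)%:R)%R * (sQ l m / sQ 0 m) ^+ 2 + acc)%R 0%R (iota 0 8)
       = ((Q l)%:R)%R :> rat) ->
  (forall k, k < 8 -> Q k <= 24) ->
  perm_check (search T Q) ->
  forall n (G G' : 'I_8 -> 'M[nat]_n),
      nimrep G -> matches Z G -> nimrep G' -> matches Z G' -> nimrep_equiv G G'.
Proof.
move=> Htr HZ HT HQ HQ24 Hpc n G G' HN HM HN' HM'.
have Hn : n = 3 by case: HM => E _; rewrite E Htr.
subst n.
have HF := facts_of HN HM HZ HT HQ.
have HF' := facts_of HN' HM' HZ HT HQ.
have Ha := afull_search HF HQ24.
have Ha' := afull_search HF' HQ24.
have /allP/(_ _ Ha)/allP/(_ _ Ha')/hasP[p Hp Hrel] := Hpc.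
pose f := fun i : 'I_3 => (inord (nth 0 p i) : 'I_3).
exists (perm (pf_inj Hp)) => l; apply/matrixP => i j; rewrite !mxE !permE.
have Hlt : forall i : 'I_3, nth 0 p i < 3.
  move=> k; have /allP/(_ p Hp)/andP[/andP[_ /eqP Hs] /allP Hal] := perms6_ok.
  by apply: Hal; apply: mem_nth; rewrite Hs.
have /allP/(_ l) := Hrel; rewrite mem_iota ltn_ord => /(_ isT) /allP/(_ i).
rewrite mem_iota ltn_ord => /(_ isT) /allP/(_ j); rewrite mem_iota ltn_ord => /(_ isT).
rewrite (afull_agrees HF) ?(afull_agrees HF') ?Hlt // => /eqP.
by rewrite /gof !inord_val => ->.
Qed.

End Part5.
Import Part5.

Module Part6.
Local Open Scope ring_scope.

Definition Gof (a : asgT) : 'I_8 -> 'M[nat]_3 := fun l => \matrix_(i, j) aent a l i j.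
Definition VQ (V : seq (seq int)) (i j : nat) : rat := (nth 0%Z (nth [::] V i) j)%:~R.
Definition dd (nv : seq nat) (j : nat) : algC := (sqrtC (nth 0%N nv j)%:R)^-1.
Definition Umx V nv : 'M[algC]_3 := \matrix_(i, j) (ratr (VQ V i j) * dd nv j).
Definition muf (muL : seq nat) (i : 'I_3) : 'I_8 := inord (nth 0%N muL i).
Definition psiQ (l m : nat) : rat := sQ l m / sQ 0 m.
Definition rsum n (f : nat -> rat) : rat := foldr (fun i acc => f i + acc) 0 (iota 0 n).

Definition unit_ok V nv : bool :=
  all (fun i => all (fun j =>
    rsum 3 (fun k => VQ V i k * VQ V j k / (nth 0%N nv k)%:R) == (i == j)%:R)
  (iota 0 3)) (iota 0 3).
Definition diag_ok (a : asgT) V nv muL : bool :=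
  all (fun l => all (fun i => all (fun j =>
    rsum 3 (fun b => rsum 3 (fun c => VQ V c i * (aent a l c b)%:R * VQ V b j)) ==
    (if i == j then psiQ l (nth 0%N muL i) * (nth 0%N nv i)%:R else 0))
  (iota 0 3)) (iota 0 3)) (iota 0 8).
Definition count_ok (muL : seq nat) (zd : nat -> nat) : bool :=
  all (fun m => fsum 3 (fun k => (nth 0%N muL k == m) : nat) == zd m) (iota 0 8).

Lemma all3 (P : nat -> bool) (i : 'I_3) : all P (iota 0 3) -> P i.
Proof. by move/allP/(_ i); rewrite mem_iota ltn_ord => /(_ isT). Qed.
Lemma all8 (P : nat -> bool) (i : 'I_8) : all P (iota 0 8) -> P i.
Proof. by move/allP/(_ i); rewrite mem_iota ltn_ord => /(_ isT). Qed.

Lemma tentC t i j : tent t i j = tent t j i.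
Proof. by rewrite /tent /idx minnC maxnC. Qed.

Lemma nimrep_Gof a : nth None a 0 = Some idt -> all (defd a) (iota 0 8) -> check a ->
  nimrep (Gof a).
Proof.
move=> H0 Hd Hc; split.
- apply/matrixP => i j; rewrite !mxE /aent H0.
  by case: i => [[|[|[|i]]] Hi] //; case: j => [[|[|[|j]]] Hj].
- move=> l; apply/matrixP => i j; rewrite !mxE /cnj /aent.
  by case: (nth None a l) => // t; rewrite tentC.
- move=> l m; apply/matrixP => i j; rewrite !mxE summxE.
  have Hf : fus_ok a l m.
    move: (all8 l Hc) => /(all8 m) /implyP; apply.
    apply/allP => c Hc'; apply: (allP Hd); rewrite mem_iota add0n.
    move: Hc'; rewrite !in_cons mem_filter mem_iota add0n => /orP[/eqP ->|/orP[/eqP ->|/andP[_ /andP[_ ->]]]] //; by rewrite ltn_ord.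
  have /eqP E := all3 j (all3 i Hf).
  transitivity (((\sum_k Gof a l i k * Gof a m k j)%N)%:R : algC).
    by rewrite natr_sum; apply: eq_bigr => k _; rewrite !mxE natrM.
  transitivity (((\sum_(c < 8) Nn l m c * Gof a c i j)%N)%:R : algC); last first.
    by rewrite natr_sum; apply: eq_bigr => c _; rewrite !mxE NfusE natrM.
  congr (_%:R).
  rewrite (@sum_ord_fun _ 3 _ (fun k => aent a l i k * aent a m k j)%N); last first.
    by move=> k; rewrite !mxE.
  rewrite (@sum_ord_fun _ 8 _ (fun c => Nn l m c * aent a c i j)%N); last first.
    by move=> c; rewrite !mxE.
  exact: E.
Qed.

Lemma dd_conj nv j : (dd nv j)^* = dd nv j.
Proof. by apply: geC0_conj; rewrite invr_ge0 sqrtC_ge0 ler0n. Qed.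

Lemma dd_sq nv j : dd nv j * dd nv j = ((nth 0%N nv j)%:R)^-1.
Proof. by rewrite -expr2 /dd exprVn sqrtCK. Qed.

Lemma nth_lt8 (muL : seq nat) k : all (fun x => x < 8)%N muL -> (nth 0%N muL k < 8)%N.
Proof.
move=> /allP H; case: (ltnP k (size muL)) => Hk; first by apply: H; apply: mem_nth.
by rewrite nth_default.
Qed.

Lemma count_card muL zd (m : 'I_8) : all (fun x => x < 8)%N muL -> count_ok muL zd ->
  #|[pred i | muf muL i == m]| = zd m.
Proof.
move=> Hb Hc; rewrite -sum1_card big_mkcond /=.
rewrite (@sum_ord_fun _ 3 _ (fun k => (nth 0%N muL k == m) : nat)); last first.
  move=> k; rewrite inE -(inj_eq val_inj) /= inordK; last exact: nth_lt8.
  by case: (_ == _).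
exact/eqP/(all8 m Hc).
Qed.

Lemma diag_entry a V nv l (i j : 'I_3) :
  ((map_mx Num.conj (Umx V nv))^T *m toC (Gof a l) *m Umx V nv) i j =
  dd nv i * dd nv j * ratr (rsum 3 (fun b => rsum 3 (fun c =>
      VQ V c i * (aent a l c b)%:R * VQ V b j))).
Proof.
rewrite mxE /rsum -(@sum_iota _ 3 (fun b => rsum 3 (fun c =>
      VQ V c i * (aent a l c b)%:R * VQ V b j))) rmorph_sum mulr_sumr.
apply: eq_bigr => b _.
rewrite mxE /rsum -(@sum_iota _ 3 (fun c => VQ V c i * (aent a l c b)%:R * VQ V b j)).
rewrite rmorph_sum mulr_sumr mulr_suml; apply: eq_bigr => c _.
rewrite !mxE [(_ * dd nv i)^*]rmorphM /= conj_Crat ?Crat_rat // dd_conj !rmorphM /= rmorph_nat.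
ring.
Qed.

Lemma exist_gen Z (zd : nat -> nat) a V nv muL :
  mxtr8 Z = 3%N -> (forall m : 'I_8, Z m m = zd m) ->
  nth None a 0 = Some idt -> all (defd a) (iota 0 8) -> check a ->
  all (fun x => x < 8)%N muL -> count_ok muL zd ->
  all (fun k => nth 0%N nv k != 0%N) (iota 0 3) ->
  unit_ok V nv -> diag_ok a V nv muL ->
  exists n (G : 'I_8 -> 'M[nat]_n), nimrep G /\ matches Z G.
Proof.
move=> Htr HZ H0 Hd Hc Hmu Hcnt Hnv Hu Hdg.
exists 3%N, (Gof a); split; first exact: nimrep_Gof.
split; first by rewrite Htr.
exists (muf muL), (Umx V nv); split.
- by move=> m; rewrite HZ; apply: count_card.
- apply/matrixP => i j; rewrite !mxE.
  transitivity (\sum_(k < 3) ratr (VQ V i k * VQ V j k / (nth 0%N nv k)%:R) : algC).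
    apply: eq_bigr => k _.
    rewrite !mxE rmorphM /= conj_Crat ?Crat_rat // dd_conj.
    rewrite !rmorphM /= fmorphV rmorph_nat -dd_sq.
    by rewrite mulrACA.
  rewrite -rmorph_sum (@sum_iota _ 3 (fun k => VQ V i k * VQ V j k / (nth 0%N nv k)%:R)).
  have := eqP (all3 j (all3 i Hu)); rewrite /rsum => ->; rewrite rmorph_nat.
  by [].
- move=> l; apply/matrixP => i j.
  rewrite diag_entry (eqP (all3 j (all3 i (all8 l Hdg)))) mxE.
  have [<-|Hij] := eqVneq i j.
    rewrite !eqxx /= mulr1n mxE !SmxE -fmorph_div /= inordK; last exact: nth_lt8.
    rewrite dd_sq rmorphM rmorph_nat mulrC -mulrA mulfV ?mulr1 //.
    by rewrite pnatr_eq0 (all3 i Hnv).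
  have -> : ((i : nat) == j) = false by apply/negP => /eqP /val_inj E; move: Hij; rewrite E eqxx.
  by rewrite rmorph0 mulr0 mulr0n.
Qed.

End Part6.
Import Part6.

Module Part7.
Local Open Scope ring_scope.

Definition trchk (zd T : nat -> nat) : bool :=
  all (fun l => foldr (fun m acc => (zd m)%:R * (sQ l m / sQ 0 m) + acc) 0 (iota 0 8)
       == (T l)%:R :> rat) (iota 0 8).
Definition sqchk (zd Q : nat -> nat) : bool :=
  all (fun l => foldr (fun m acc => (zd m)%:R * (sQ l m / sQ 0 m) ^+ 2 + acc) 0 (iota 0 8)
       == (Q l)%:R :> rat) (iota 0 8).

Lemma case_gen (Z : 'M[nat]_8) (zd T Q : nat -> nat) a V nv muL :
  (forall m : 'I_8, Z m m = zd m) ->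
  fsum 8 zd = 3%N -> trchk zd T -> sqchk zd Q ->
  all (fun k => Q k <= 24)%N (iota 0 8) ->
  perm_check (search T Q) ->
  nth None a 0 == Some idt -> all (defd a) (iota 0 8) -> check a ->
  all (fun x => x < 8)%N muL -> count_ok muL zd ->
  all (fun k => nth 0%N nv k != 0%N) (iota 0 3) ->
  unit_ok V nv -> diag_ok a V nv muL ->
  unique_matching_nimrep Z.
Proof.
move=> HZ Hs Ht Hq HQ Hp H0 Hd Hc Hmu Hcnt Hnv Hu Hdg.
have Htr : mxtr8 Z = 3%N.
  by rewrite /mxtr8 (@sum_ord_fun _ 8 _ zd) //.
split; first exact: (exist_gen Htr HZ (eqP H0) Hd Hc Hmu Hcnt Hnv Hu Hdg).
have HT : forall l, (l < 8)%N -> foldr (fun m acc => (zd m)%:R * (sQ l m / sQ 0 m) + acc) 0 (iota 0 8)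
       = (T l)%:R :> rat.
  by move=> l Hl; apply/eqP; move/allP: Ht; apply; rewrite mem_iota.
have HQq : forall l, (l < 8)%N -> foldr (fun m acc => (zd m)%:R * (sQ l m / sQ 0 m) ^+ 2 + acc) 0 (iota 0 8)
       = (Q l)%:R :> rat.
  by move=> l Hl; apply/eqP; move/allP: Hq; apply; rewrite mem_iota.
have HQ24 : forall k, (k < 8)%N -> (Q k <= 24)%N.
  by move=> k Hk; move/allP: HQ; apply; rewrite mem_iota.
exact: (uniq_gen Htr HZ HT HQq HQ24 Hp).
Qed.

Definition tab (s : seq nat) (k : nat) : nat := nth 0%N s k.

Definition VA : seq (seq int) := [:: [:: 1; 1; 1]; [:: 1; -1; 1]; [:: 1; 0; -2]]%Z.
Definition VB : seq (seq int) := [:: [:: 2; 1; 0]; [:: 1; -1; 1]; [:: 1; -1; -1]]%Z.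
Definition nvA : seq nat := [:: 3; 2; 6]%N.
Definition nvB : seq nat := [:: 6; 3; 2]%N.

Definition aA : asgT := [:: Some idt; Some [:: 1; 0; 0; 1; 0; 1]; Some [:: 2; 0; 0; 2; 0; 2];
  Some [:: 0; 1; 1; 0; 1; 0]; Some [:: 0; 1; 1; 0; 1; 0]; Some [:: 0; 1; 1; 0; 1; 0];
  Some [:: 1; 1; 1; 1; 1; 1]; Some [:: 1; 1; 1; 1; 1; 1]]%N.
Definition aA' : asgT := [:: Some idt; Some [:: 1; 0; 0; 1; 0; 1]; Some [:: 0; 1; 1; 0; 1; 0];
  Some [:: 2; 0; 0; 2; 0; 2]; Some [:: 0; 1; 1; 0; 1; 0]; Some [:: 0; 1; 1; 0; 1; 0];
  Some [:: 1; 1; 1; 1; 1; 1]; Some [:: 1; 1; 1; 1; 1; 1]]%N.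
Definition aB : asgT := [:: Some idt; Some [:: 1; 0; 0; 0; 1; 0]; Some [:: 2; 0; 0; 1; 1; 1];
  Some [:: 1; 1; 1; 0; 0; 0]; Some [:: 1; 1; 1; 0; 0; 0]; Some [:: 1; 1; 1; 0; 0; 0];
  Some [:: 2; 1; 1; 1; 0; 1]; Some [:: 2; 1; 1; 0; 1; 0]]%N.
Definition aC : asgT := [:: Some idt; Some [:: 1; 0; 0; 0; 1; 0]; Some [:: 1; 1; 1; 0; 0; 0];
  Some [:: 2; 0; 0; 1; 1; 1]; Some [:: 1; 1; 1; 0; 0; 0]; Some [:: 1; 1; 1; 0; 0; 0];
  Some [:: 2; 1; 1; 0; 1; 0]; Some [:: 2; 1; 1; 1; 0; 1]]%N.
Definition aD : asgT := [:: Some idt; Some [:: 1; 0; 0; 0; 1; 0]; Some [:: 2; 0; 0; 1; 1; 1];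
  Some [:: 1; 1; 1; 0; 0; 0]; Some [:: 1; 1; 1; 0; 0; 0]; Some [:: 1; 1; 1; 0; 0; 0];
  Some [:: 2; 1; 1; 0; 1; 0]; Some [:: 2; 1; 1; 1; 0; 1]]%N.


Lemma caseA (Z : 'M[nat]_8) : (forall m : 'I_8, Z m m = tab [:: 1; 0; 2; 0; 0; 0; 0; 0]%N m) ->
  unique_matching_nimrep Z.
Proof.
move=> HZ.
apply: (@case_gen Z _ (tab [:: 3;3;6;0;0;0;3;3]%N) (tab [:: 3;3;12;6;6;6;9;9]%N)
          aA VA nvA [:: 0; 2; 2]%N HZ); by vm_compute.
Qed.

Lemma caseA' (Z : 'M[nat]_8) : (forall m : 'I_8, Z m m = tab [:: 1; 0; 0; 2; 0; 0; 0; 0]%N m) ->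
  unique_matching_nimrep Z.
Proof.
move=> HZ.
apply: (@case_gen Z _ (tab [:: 3;3;0;6;0;0;3;3]%N) (tab [:: 3;3;6;12;6;6;9;9]%N)
          aA' VA nvA [:: 0; 3; 3]%N HZ); by vm_compute.
Qed.

Lemma caseB (Z : 'M[nat]_8) : (forall m : 'I_8, Z m m = tab [:: 1; 0; 1; 0; 0; 0; 1; 0]%N m) ->
  unique_matching_nimrep Z.
Proof.
move=> HZ.
apply: (@case_gen Z _ (tab [:: 3;1;4;1;1;1;4;2]%N) (tab [:: 3;3;8;5;5;5;10;10]%N)
          aB VB nvB [:: 0; 2; 6]%N HZ); by vm_compute.
Qed.

Lemma caseC (Z : 'M[nat]_8) : (forall m : 'I_8, Z m m = tab [:: 1; 0; 0; 1; 0; 0; 0; 1]%N m) ->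
  unique_matching_nimrep Z.
Proof.
move=> HZ.
apply: (@case_gen Z _ (tab [:: 3;1;1;4;1;1;2;4]%N) (tab [:: 3;3;5;8;5;5;10;10]%N)
          aC VB nvB [:: 0; 3; 7]%N HZ); by vm_compute.
Qed.

Lemma caseD (Z : 'M[nat]_8) : (forall m : 'I_8, Z m m = tab [:: 1; 0; 1; 0; 0; 0; 0; 1]%N m) ->
  unique_matching_nimrep Z.
Proof.
move=> HZ.
apply: (@case_gen Z _ (tab [:: 3;1;4;1;1;1;2;4]%N) (tab [:: 3;3;8;5;5;5;10;10]%N)
          aD VB nvB [:: 0; 2; 7]%N HZ); by vm_compute.
Qed.


End Part7.
Import Part7.

Theorem proposition6p5 :
  forall Z : 'M[nat]_8,
    Z \in [:: Z24; Z42; Z35; Z53; Z44; Zp55; Zp44] ->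
    unique_matching_nimrep Z.
Proof.
move=> Z; rewrite !inE.
case/orP => [/eqP ->|]; first by apply: caseA => -[[|[|[|[|[|[|[|[|m]]]]]]]] Hm]; rewrite !mxE //.
case/orP => [/eqP ->|]; first by apply: caseA => -[[|[|[|[|[|[|[|[|m]]]]]]]] Hm]; rewrite !mxE //.
case/orP => [/eqP ->|]; first by apply: caseA' => -[[|[|[|[|[|[|[|[|m]]]]]]]] Hm]; rewrite !mxE //.
case/orP => [/eqP ->|]; first by apply: caseA' => -[[|[|[|[|[|[|[|[|m]]]]]]]] Hm]; rewrite !mxE //.
case/orP => [/eqP ->|]; first by apply: caseB => -[[|[|[|[|[|[|[|[|m]]]]]]]] Hm]; rewrite !mxE //.
case/orP => [/eqP ->|]; first by apply: caseC => -[[|[|[|[|[|[|[|[|m]]]]]]]] Hm]; rewrite !mxE //.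
move/eqP => ->; by apply: caseD => -[[|[|[|[|[|[|[|[|m]]]]]]]] Hm]; rewrite !mxE //.
Qed.
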